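(* Let $A=[a_1,\dots,a_N]$ and $B=[b_1,\dots,b_N]$ be $N\times N$ complex matrices with columns $a_i,b_i$, let $\theta$ be a real parameter, and let $M(\theta)=(1-\theta)A+\theta B$ with columns $m_k(\theta)=(1-\theta)a_k+\theta b_k$. Define recursively (the modified, unnormalized Gram–Schmidt procedure) $z_1=v_1=m_1$ and, for $k\ge 2$, \[ v_k=m_k-\sum_{j=1}^{k-1}\frac{\langle z_j,m_k\rangle}{\|z_j\|^2}\,z_j,\qquad z_k=\Big(\prod_{j=1}^{k-1}\|z_j\|^2\Big)\,v_k . \] Then for every $k\in\{1,\dots,N\}$, $v_k(\theta)\in\mathbf{p}_{D_k+1}(\theta)/q_{D_k}(\theta)$, where $D_k=3^{k-1}-1$; that is, $v_k(\theta)$ can be written as a vector whose entries are polynomials in $\theta$ of degree at most $D_k+1$ divided by a common polynomial in $\theta$ of degree at most $D_k$.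
   Context: $\langle x,y\rangle=\sum_i \overline{x_i}y_i$ is the standard inner product on $\mathbb{C}^N$ and $\|x\|^2=\langle x,x\rangle$; since $\theta$ is real, $\langle z_j,m_k\rangle$ and $\|z_j\|^2$ are polynomials in $\theta$ with complex coefficients. Notation: $\mathbf{p}_\ell(\theta)$ denotes vectors each of whose entries is a polynomial of degree $\ell$ in $\theta$, $q_r(\theta)$ denotes polynomial functions of degree $r$ in $\theta$, and $\mathbf{p}_\ell(\theta)/q_r(\theta)$ denotes vectors of rational functions with numerators of degree $\ell$ and denominators of degree $r$. *)

(* Defs.v *)
From HB Require Import structures.
From mathcomp Require Import all_boot all_order all_algebra.
From mathcomp Require Import complex.
Set Implicit Arguments. Unset Strict Implicit. Unset Printing Implicit Defensive.
Import Order.TTheory GRing.Theory Num.Theory.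
Local Open Scope ring_scope.
Local Open Scope complex_scope.

Section GS.
Variables (R : rcfType) (N : nat).
Local Notation C := (R[i]).

Definition cinner (x y : 'cV[C]_N) : C := \sum_i (conjc (x i 0)) * y i 0.
Definition cnormsq (x : 'cV[C]_N) : C := cinner x x.

Definition gs_v (zs : seq 'cV[C]_N) (mk : 'cV[C]_N) : 'cV[C]_N :=
  mk - \sum_(z <- zs) (cinner z mk / cnormsq z) *: z.

Definition gs_step (zs : seq 'cV[C]_N) (mk : 'cV[C]_N) : seq 'cV[C]_N :=
  rcons zs ((\prod_(z <- zs) cnormsq z) *: gs_v zs mk).

Definition gs_zs (ms : seq 'cV[C]_N) : seq 'cV[C]_N := foldl gs_step [::] ms.

Definition Mtheta (A B : 'M[C]_N) (theta : R) : 'M[C]_N :=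
  (1 - theta)%:C *: A + theta%:C *: B.

Definition mcols (A B : 'M[C]_N) (theta : R) : seq 'cV[C]_N :=
  [seq col i (Mtheta A B theta) | i <- enum 'I_N].

(* z_1, ..., z_{k} for the 0-based index k : 'I_N, i.e. the z_j with j < k *)
Definition gs_prev (A B : 'M[C]_N) (theta : R) (k : 'I_N) : seq 'cV[C]_N :=
  gs_zs (take k (mcols A B theta)).

(* v_{k+1} (0-based index k) *)
Definition gs_vk (A B : 'M[C]_N) (theta : R) (k : 'I_N) : 'cV[C]_N :=
  gs_v (gs_prev A B theta k) (col k (Mtheta A B theta)).

End GS.

(* Main.v *)
Require Import Defs.
From HB Require Import structures.
From mathcomp Require Import all_boot all_order all_algebra.
From mathcomp Require Import complex.
From mathcomp Require Import ring zify.
Import Order.TTheory GRing.Theory Num.Theory.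
Local Open Scope ring_scope.
Local Open Scope complex_scope.

Section Aux.
Variables (R : rcfType) (N : nat).
Local Notation C := (R[i]).
Local Notation pvec := ('I_N -> {poly C}).

Definition ev (P : pvec) (t : R) : 'cV[C]_N := \col_i (P i).[t%:C].
Definition pinner (z m : pvec) : {poly C} := \sum_i map_poly (@conjc R) (z i) * m i.
Definition dle (p : {poly C}) (d : nat) := (size p <= d.+1)%N.
Definition vdeg (z : pvec) : nat := \max_i (size (z i)).-1.

Lemma hornerJ p t : (map_poly (@conjc R) p).[t%:C] = conjc (p.[t%:C]).
Proof. by rewrite -{1}(conjc_real t) horner_map. Qed.

Lemma ev_inner z m t : (pinner z m).[t%:C] = cinner (ev z t) (ev m t).
Proof.
rewrite /pinner /cinner horner_sum; apply: eq_bigr => i _.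
by rewrite hornerM hornerJ !mxE.
Qed.

Lemma dleW p a b : dle p a -> (a <= b)%N -> dle p b.
Proof. rewrite /dle => h1 h2; lia. Qed.

Lemma dleD p q a : dle p a -> dle q a -> dle (p + q) a.
Proof.
rewrite /dle => h1 h2; have := size_polyD p q; lia.
Qed.

Lemma dleN p a : dle p a -> dle (- p) a.
Proof. by rewrite /dle size_polyN. Qed.

Lemma dleM {p q a b} : dle p a -> dle q b -> dle (p * q) (a + b).
Proof.
rewrite /dle => h1 h2; have := size_polyMleq p q; lia.
Qed.

Lemma dleJ p a : dle p a -> dle (map_poly (@conjc R) p) a.
Proof. by rewrite /dle size_map_poly. Qed.

Lemma dle_vdeg z i : dle (z i) (vdeg z).
Proof.
rewrite /dle; have := @leq_bigmax _ (fun i => (size (z i)).-1) i.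
rewrite /vdeg; lia.
Qed.

Lemma dle_sum (F : 'I_N -> {poly C}) a : (forall i, dle (F i) a) -> dle (\sum_i F i) a.
Proof.
move=> h; apply: (big_ind (fun p => dle p a)) => //.
  by rewrite /dle size_poly0.
by move=> x y; apply: dleD.
Qed.

Lemma dle_inner {z m a b} : (forall i, dle (z i) a) -> (forall i, dle (m i) b) ->
  dle (pinner z m) (a + b).
Proof.
move=> hz hm; apply: dle_sum => i; apply: dleM => //; exact: dleJ.
Qed.

Lemma gsv_poly (zp : seq pvec) (m : pvec) : (forall i, dle (m i) 1) ->
  exists (P : pvec) (Q : {poly C}),
   dle Q (\sum_(z <- zp) (vdeg z).*2) /\
   (forall i, dle (P i) (\sum_(z <- zp) (vdeg z).*2).+1) /\
   forall t, Q.[t%:C] = \prod_(z <- map (ev^~ t) zp) cnormsq z /\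
     (all (fun z => cnormsq z != 0) (map (ev^~ t) zp) ->
      Q.[t%:C] *: gs_v (map (ev^~ t) zp) (ev m t) = ev P t).
Proof.
move=> hm; elim: zp => [|z zs [P [Q [hQ [hP hv]]]]].
  exists m, 1; split; first by rewrite /dle size_poly1.
  split; first by move=> i; rewrite big_nil; exact: hm.
  move=> t; rewrite /= big_nil hornerC; split => // _.
  by rewrite scale1r /gs_v big_nil subr0.
pose n := pinner z z; pose c := pinner z m.
exists (fun i => n * P i - (Q * c) * z i), (n * Q).
have hn : dle n ((vdeg z) + (vdeg z)) by exact: (dle_inner (dle_vdeg z) (dle_vdeg z)).
have hc : dle c ((vdeg z) + 1) by exact: (dle_inner (dle_vdeg z) hm).
rewrite big_cons; split.
  apply: dleW; first exact: (dleM hn hQ).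
  lia.
split.
  move=> i; apply: dleD.
    apply: dleW; first exact: (dleM hn (hP i)).
    lia.
  apply: dleN; apply: dleW.
    exact: (dleM (dleM hQ hc) (dle_vdeg z i)).
  lia.
move=> t; have [hQt hvt] := hv t.
rewrite /= big_cons hornerM hQt /n ev_inner; split => //.
case/andP=> hz hall; have := hvt hall.
rewrite -hQt /gs_v big_cons /=.
set g := (ev m t - _); rewrite opprD addrA -/g => hg.
apply/matrixP => i j; move/matrixP: hg => /(_ i j).
rewrite !mxE !hornerE /c ev_inner -/(cnormsq _) => <-.
set N0 := cnormsq _ in hz *.
rewrite ev_inner.
field.
exact: hz.
Qed.


Definition pcol (A B : 'M[C]_N) (j : 'I_N) : pvec :=
  fun i => (A i j)%:P + 'X * (B i j - A i j)%:P.

Lemma ev_pcol A B j t : ev (pcol A B j) t = col j (Mtheta A B t).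
Proof.
apply/matrixP => i k; rewrite !mxE !hornerE rmorphB rmorph1 /=.
ring.
Qed.

Lemma dle_pcol A B j i : dle (pcol A B j i) 1.
Proof.
apply: dleD.
  by apply: dleW; [exact: size_polyC_leq1 | by []].
apply: (@dleW _ (1 + 0)) => //; apply: dleM.
  by rewrite /dle size_polyX.
exact: size_polyC_leq1.
Qed.

Lemma zs_poly A B (s : seq 'I_N) :
  exists zp : seq pvec, size zp = size s /\
   (\sum_(z <- zp) (vdeg z).*2 <= 3 ^ size s - 1)%N /\
   forall t, all (fun z => cnormsq z != 0) (gs_zs [seq col i (Mtheta A B t) | i <- s]) ->
     gs_zs [seq col i (Mtheta A B t) | i <- s] = map (ev^~ t) zp.
Proof.
elim/last_ind: s => [|s j [zp [hs [hS hv]]]].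
  by exists [::]; rewrite big_nil.
have [P [Q [hQ [hP hPv]]]] := gsv_poly zp (pcol A B j) (dle_pcol A B j).
exists (rcons zp P); split; first by rewrite !size_rcons hs.
split.
  rewrite -cats1 big_cat big_seq1 /= size_rcons expnS.
  have hvP : (vdeg P <= (\sum_(z <- zp) (vdeg z).*2).+1)%N.
    apply/bigmax_leqP => i _; have := hP i; rewrite /dle; lia.
  have := expn_gt0 3 (size s); rewrite -!addnn; lia.
move=> t; rewrite map_rcons /gs_zs foldl_rcons -/(gs_zs _) /gs_step all_rcons.
case/andP=> _ hall; rewrite (hv t hall) map_rcons; congr rcons.
have [hQt hPt] := hPv t.
rewrite -ev_pcol -hQt; apply: hPt; rewrite -(hv t hall); exact: hall.
Qed.

End Aux.
Arguments pcol {R N}.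
Arguments ev {R N}.
Arguments dle_pcol {R N}.
Arguments zs_poly {R N}.
Arguments gsv_poly {R N}.
Arguments ev_pcol {R N}.

(* k : 'I_N is 0-based, so the paper's index is k+1 and D_{k+1} = 3^k - 1. *)
Theorem lemma5 (R : rcfType) (N : nat) (A B : 'M[R[i]]_N) (k : 'I_N) :
  exists (p : 'I_N -> {poly R[i]}) (q : {poly R[i]}),
    (forall i, (size (p i) <= (3 ^ k - 1).+2)%N) /\
    (size q <= (3 ^ k - 1).+1)%N /\
    forall theta : R,
      all (fun z => cnormsq z != 0) (gs_prev A B theta k) ->
      q.[theta%:C] != 0 /\
      gs_vk A B theta k = (q.[theta%:C])^-1 *: \col_i (p i).[theta%:C].
Proof.
pose s := take k (enum 'I_N).
have [zp [hs [hS hv]]] := zs_poly A B s.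
have [P [Q [hQ [hP hPv]]]] := gsv_poly zp (pcol A B k) (dle_pcol A B k).
have hk : size s = k by rewrite size_takel // size_enum_ord ltnW.
rewrite hk in hS.
exists P, Q; split.
  by move=> i; have := hP i; rewrite /dle; lia.
split; first by move: hQ; rewrite /dle; lia.
move=> t; rewrite /gs_vk /gs_prev /mcols -map_take -/s => hall.
have e := hv t hall; rewrite e in hall *.
have [hQt hPt] := hPv t.
have hQ0 : Q.[t%:C] != 0.
  by rewrite hQt prodf_seq_neq0; apply: sub_all hall => x /= ->.
split => //.
rewrite -ev_pcol; have := hPt hall; rewrite /ev => <-.
by rewrite scalerA mulVf // scale1r.
Qed.
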